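(* Let $t\in\mathbb N$, $\mathbb F_q$ of characteristic $2$, and for $i\in[t]$ let $\mathcal C_i=(C_i,\partial_i)$ be single-sector chain complexes with $n_i=\dim C_i$; let $\rho_i$ be the product-expansion of $(B_*(\mathcal C_1),\dots,B_*(\mathcal C_{i-1}),Z_*(\mathcal C_i))$. Let $$a\in\bigotimes_{i\in[t]}Z_*(\mathcal C_i)+\sum_{i\in[t]}B_*(\mathcal C_i)^{(i)}\subseteq C_1\otimes\cdots\otimes C_t,$$ and suppose there exist $z^i\in Z^*(\mathcal C_i)$, $i\in[t]$, with $\left(\bigotimes_{i\in[t]}z^i\right)\cdot a\neq0$. Then $|a|\ge\prod_{i\in[t]}(\rho_in_i)$.
   Context: Product-expansion: For codes $C_1\subseteq\mathbb F_q^{n_1},\dots,C_t\subseteq\mathbb F_q^{n_t}$, identify $\mathbb F_q^{n_1}\otimes\cdots\otimes\mathbb F_q^{n_t}$ with $t$-dimensional arrays; a direction-$i$ column is the vector in $\mathbb F_q^{n_i}$ obtained by fixing all coordinates except the $i$-th. $C^{(i)}$ is the space of arrays all of whose direction-$i$ columns lie in $C_i$, and $C_1\boxplus\cdots\boxplus C_t=C^{(1)}+\cdots+C^{(t)}$. $|c|$ is the number of nonzero entries, $|c|_i$ the number of nonzero direction-$i$ columns. The product-expansion of $(C_i)_{i\in[t]}$ is the largest $\rho\ge0$ such that every $c\in C_1\boxplus\cdots\boxplus C_t$ has a decomposition $c=c_1+\cdots+c_t$ with $c_i\in C^{(i)}$ and $|c|\ge\rho\sum_in_i|c_i|_i$.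 For a subspace $V\subseteq C_i$, $V^{(i)}$ similarly denotes arrays in $C_1\otimes\cdots\otimes C_t$ all of whose direction-$i$ columns lie in $V$. Single-sector complex: $\mathcal C=(C,\partial)$ with $C=\mathbb F_q^n$, $\partial^2=0$; $Z_*=\ker\partial$, $B_*=\operatorname{im}\partial$, $Z^*=\ker\partial^\top$. The dot product on arrays is the standard entrywise bilinear form. *)

(* Defs.v *)
From HB Require Import structures.
From mathcomp Require Import all_boot all_order all_algebra.
Import Order.TTheory GRing.Theory Num.Theory.
Local Open Scope ring_scope.

Section Arrays.
Context {F : fieldType}.

Definition idx {k : nat} (m : 'I_k -> nat) := {dffun forall j : 'I_k, 'I_(m j)}.

(* an array: an element of F^{m_0} (x) ... (x) F^{m_{k-1}} *)
Definition arr {k : nat} (m : 'I_k -> nat) := idx m -> F.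

Definition code (n : nat) := ('I_n -> F) -> Prop.

Definition upd {k : nat} {m : 'I_k -> nat} (x : idx m) (i : 'I_k) (a : 'I_(m i)) : idx m :=
  [ffun j => match i =P j with
             | ReflectT e => ecast j 'I_(m j) e a
             | ReflectF _ => x j
             end].

Definition column {k : nat} {m : 'I_k -> nat} (c : arr m) (i : 'I_k) (x : idx m)
  : 'I_(m i) -> F := fun a => c (upd x i a).

Definition wt {k : nat} {m : 'I_k -> nat} (c : arr m) : nat := #|[set x | c x != 0]|.

(* |c|_i : number of nonzero direction-i columns; each column is counted
   through its representative multi-index whose i-th coordinate is 0 *)
Definition colwt {k : nat} {m : 'I_k -> nat} (c : arr m) (i : 'I_k) : nat :=
  #|[set x : idx m | (nat_of_ord (x i) == 0%N) &&
                      [exists a : 'I_(m i), column c i x a != 0]]|.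

Definition in_dir {k : nat} {m : 'I_k -> nat} (C : forall j : 'I_k, code (m j))
  (i : 'I_k) (c : arr m) : Prop :=
  forall x : idx m, C i (column c i x).

Definition is_sum {k : nat} {m : 'I_k -> nat} (c : arr m) (cs : 'I_k -> arr m) : Prop :=
  forall x, c x = \sum_(j < k) cs j x.

Definition in_boxplus {k : nat} {m : 'I_k -> nat} (C : forall j : 'I_k, code (m j))
  (c : arr m) : Prop :=
  exists cs : 'I_k -> arr m, (forall j, in_dir C j (cs j)) /\ is_sum c cs.

Context {R : realFieldType}.

Definition expands {k : nat} {m : 'I_k -> nat} (C : forall j : 'I_k, code (m j)) (rho : R)
  : Prop :=
  forall c : arr m, in_boxplus C c ->
    exists cs : 'I_k -> arr m,
      [/\ forall j, in_dir C j (cs j), is_sum c cs &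
          rho * (\sum_(j < k) (m j * colwt (cs j) j)%:R) <= (wt c)%:R].

Definition is_product_expansion {k : nat} {m : 'I_k -> nat}
  (C : forall j : 'I_k, code (m j)) (rho : R) : Prop :=
  [/\ 0 <= rho, expands C rho &
      forall rho', 0 <= rho' -> expands C rho' -> rho' <= rho].

(* single-sector complex (F^n, d) with d a square matrix acting on column
   vectors: (d v)_r = sum_s d r s * v s *)
Definition Zlow {n : nat} (d : 'M[F]_n) : code n :=
  fun v => forall r : 'I_n, \sum_(s < n) d r s * v s = 0.
Definition Blow {n : nat} (d : 'M[F]_n) : code n :=
  fun v => exists u : 'I_n -> F, forall r : 'I_n, v r = \sum_(s < n) d r s * u s.
Definition Zup {n : nat} (d : 'M[F]_n) : code n :=
  fun w => forall s : 'I_n, \sum_(r < n) d r s * w r = 0.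

(* the tensor product C_1 (x) ... (x) C_k as the span of pure tensors *)
Definition in_tensor {k : nat} {m : 'I_k -> nat} (C : forall j : 'I_k, code (m j))
  (c : arr m) : Prop :=
  exists s : seq (forall j : 'I_k, 'I_(m j) -> F),
    (forall i : 'I_(size s), forall j, C j (nth (fun j _ => 0) s i j)) /\
    forall x : idx m, c x = \sum_(i < size s) \prod_(j < k) nth (fun j _ => 0) s i j (x j).

Definition dot_pure {k : nat} {m : 'I_k -> nat} (z : forall j : 'I_k, 'I_(m j) -> F)
  (a : arr m) : F :=
  \sum_(x : idx m) (\prod_(j < k) z j (x j)) * a x.

End Arrays.

Definition prefix_ord {t : nat} (i : 'I_t) (j : 'I_i.+1) : 'I_t :=
  widen_ord (ltn_ord i) j.

(* Main.v *)
Require Import Defs.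
From HB Require Import structures.
From mathcomp Require Import all_boot all_order all_algebra.
From Stdlib Require Import FunctionalExtensionality.
From mathcomp Require Import ring.
Import Order.TTheory GRing.Theory Num.Theory.
Local Open Scope ring_scope.
Set Implicit Arguments. Unset Strict Implicit. Unset Printing Implicit Defensive.

Section Gen.
Variable F : fieldType.
Variables (k : nat) (m : 'I_k -> nat).

Lemma upd_same (x : idx m) i a : upd x i a i = a.
Proof.
rewrite /upd ffunE; case: eqP => // e.
by rewrite (eq_irrelevance e erefl).
Qed.

Lemma upd_other (x : idx m) i a j : i != j -> upd x i a j = x j.
Proof. by rewrite /upd ffunE; case: eqP. Qed.

Lemma upd_id (x : idx m) i : upd x i (x i) = x.
Proof.
apply/ffunP => j; case: (eqVneq i j) => [<-|ne]; first by rewrite upd_same.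
by rewrite upd_other.
Qed.

Lemma upd_upd (x : idx m) i a b : upd (upd x i a) i b = upd x i b.
Proof.
apply/ffunP => j; case: (eqVneq i j) => [<-|ne]; first by rewrite !upd_same.
by rewrite !upd_other.
Qed.

Definition lin_closed n (C : @code F n) :=
  [/\ C (fun _ => 0), forall u v, C u -> C v -> C (fun r => u r + v r) &
      forall c u, C u -> C (fun r => c * u r)].

Lemma C_ext n (C : @code F n) (g h : 'I_n -> F) : C g -> g =1 h -> C h.
Proof. by move=> Cg e; rewrite -(functional_extensionality _ _ e). Qed.

Lemma lin_sum n (C : @code F n) (I : finType) (g : I -> 'I_n -> F) :
  lin_closed C -> (forall i, C (g i)) -> C (fun r => \sum_i g i r).
Proof.
case=> C0 CD CZ Hg.
have : forall s : seq I, C (fun r => \sum_(i <- s) g i r).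
  elim=> [|i s IH]; first by apply: C_ext C0 _ => r; rewrite big_nil.
  by apply: C_ext (CD _ _ (Hg i) IH) _ => r; rewrite big_cons.
exact.
Qed.

Lemma lin_comb n (C : @code F n) (I : finType) (c : I -> F) (g : I -> 'I_n -> F) :
  lin_closed C -> (forall i, C (g i)) -> C (fun r => \sum_i c i * g i r).
Proof.
move=> HC Hg; apply: (lin_sum (g := fun i r => c i * g i r)) => // i.
by case: HC => _ _ CZ; apply: CZ.
Qed.

Lemma lin_sub n (C : @code F n) u v : lin_closed C -> C u -> C v -> C (fun r => u r - v r).
Proof.
case=> _ CD CZ Hu Hv; apply: (C_ext (g := fun r => u r + (-1) * v r)).
  by apply: CD => //; apply: CZ.
by move=> r; rewrite mulN1r.
Qed.

End Gen.

Section Gen2.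
Variable F : fieldType.
Variables (k : nat) (m : 'I_k -> nat).

Lemma Zlow_lin n (D : 'M[F]_n) : lin_closed (Zlow D).
Proof.
split.
- by move=> r; rewrite big1 // => s _; rewrite mulr0.
- move=> u v Hu Hv r; under eq_bigr do rewrite mulrDr.
  by rewrite big_split /= Hu Hv addr0.
- move=> c u Hu r; under eq_bigr do rewrite mulrCA.
  by rewrite -mulr_sumr Hu mulr0.
Qed.

Lemma Blow_lin n (D : 'M[F]_n) : lin_closed (Blow D).
Proof.
split.
- by exists (fun _ => 0) => r; rewrite big1 // => s _; rewrite mulr0.
- move=> u v [u1 H1] [v1 H2]; exists (fun s => u1 s + v1 s) => r.
  by under eq_bigr do rewrite mulrDr; rewrite big_split /= H1 H2.
- move=> c u [u1 H1]; exists (fun s => c * u1 s) => r.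
  by under eq_bigr do rewrite mulrCA; rewrite -mulr_sumr H1.
Qed.

Lemma Blow_Zlow n (D : 'M[F]_n) v : D *m D = 0 -> Blow D v -> Zlow D v.
Proof.
move=> DD [u Hu] r.
under eq_bigr do rewrite Hu mulr_sumr.
rewrite exchange_big /=.
rewrite big1 // => l _.
have : (D *m D) r l = 0 by rewrite DD mxE.
rewrite mxE => E.
rewrite -[RHS](mul0r (u l)) -[in RHS]E mulr_suml.
by apply: eq_bigr => s _; rewrite mulrA.
Qed.

Lemma Zup_Blow n (D : 'M[F]_n) w v : Zup D w -> Blow D v ->
  \sum_(r < n) w r * v r = 0.
Proof.
move=> Hw [u Hu].
under eq_bigr do rewrite Hu mulr_sumr.
rewrite exchange_big /= big1 // => s _.
have := Hw s => E.
rewrite -[RHS](mul0r (u s)) -[in RHS]E mulr_suml; apply: eq_bigr => r _.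
by rewrite mulrA [w r * _]mulrC.
Qed.

Lemma dot_dir0 (z : forall j, 'I_(m j) -> F) (c : @arr F k m) j :
  (forall y, \sum_s z j s * column c j y s = 0) -> dot_pure z c = 0.
Proof.
move=> H; rewrite /dot_pure.
case: (pickP (@predT 'I_(m j))) => [s0 _|none]; last first.
  by rewrite big1 // => y _; have := none (y j).
rewrite (partition_big (fun y => upd y j s0) (fun x : idx m => x j == s0)) /=;
  last by move=> y _; rewrite upd_same.
rewrite big1 // => x /eqP xj.
rewrite (reindex_onto (fun s => upd x j s) (fun y : idx m => y j)) /=; last first.
  by move=> y /eqP <-; rewrite upd_upd upd_id.
rewrite (eq_bigl xpredT); last first.
  by move=> s; rewrite upd_upd -xj upd_id upd_same !eqxx.
rewrite -[RHS](mulr0 (\prod_(l | l != j) z l (x l))) -[in RHS](H x) mulr_sumr.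
apply: eq_bigr => s _.
rewrite (bigD1 j) //= upd_same /column.
rewrite (eq_bigr (fun l => z l (x l))); last by move=> l lj; rewrite upd_other // eq_sym.
by rewrite mulrCA mulrA.
Qed.


Lemma tensor_cols (d : forall j, 'M[F]_(m j)) (a0 : @arr F k m) :
  in_tensor (fun i => Zlow (d i)) a0 -> forall j x, Zlow (d j) (column a0 j x).
Proof.
case=> s [Hs Ha] j x.
set g := fun (i : 'I_(size s)) (u : 'I_(m j)) =>
  (\prod_(l | l != j) nth (fun j _ => 0) s i l (x l)) * nth (fun j _ => 0) s i j u.
apply: (C_ext (g := fun u => \sum_i g i u)).
  apply: lin_sum; first exact: Zlow_lin.
  move=> i; case: (Zlow_lin (d j)) => _ _ CZ; exact: CZ.
move=> u; rewrite /column Ha; apply: eq_bigr => i _.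
rewrite (bigD1 j) //= upd_same mulrC; congr (_ * _).
by apply: eq_bigr => l lj; rewrite upd_other // eq_sym.
Qed.

End Gen2.

Section Ext.
Variable F : fieldType.
Variables (k : nat) (f : nat -> nat).
Notation mS := (fun i : 'I_k.+1 => f i).
Notation m' := (fun i : 'I_k => f i).

Definition restr (y : idx mS) : idx m' := [ffun j : 'I_k => y (widen_ord (leqnSn k) j)].

Lemma eqk (j : 'I_k.+1) : (k <= j)%N -> f k = f j.
Proof. by move=> h; congr f; apply/eqP; rewrite eqn_leq h -ltnS ltn_ord. Qed.

Definition extv (x : idx m') (a : 'I_(f k)) (j : 'I_k.+1) : 'I_(f j) :=
  match ltnP j k with
  | LtnNotGeq h => x (Ordinal h)
  | GeqNotLtn h => cast_ord (eqk h) a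
  end.

Definition ext x a : idx mS := [ffun j => extv x a j].

Lemma ext_widen x a (j : 'I_k) : ext x a (widen_ord (leqnSn k) j) = x j.
Proof.
rewrite ffunE /extv; case: ltnP => h; last by have := ltn_ord j; rewrite ltnNge h.
by case: j h => j hj h /=; rewrite (bool_irrelevance h hj).
Qed.

Lemma ext_max x a : ext x a ord_max = a.
Proof.
rewrite ffunE /extv; case: ltnP => h; first by have := h; rewrite ltnn.
by apply: val_inj.
Qed.

Lemma restr_ext x a : restr (ext x a) = x.
Proof. by apply/ffunP => j; rewrite ffunE ext_widen. Qed.

Lemma ext_restr y : ext (restr y) (y ord_max) = y.
Proof.
apply/ffunP => j; rewrite ffunE /extv; case: ltnP => h.
  rewrite ffunE; case: j h => j hj h /=.
  by rewrite /widen_ord /= (bool_irrelevance (widen_ord_proof (Ordinal h) (leqnSn k)) hj).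
apply: val_inj => /=.
have -> : j = ord_max by apply: val_inj; apply/eqP; rewrite /= eqn_leq h -ltnS ltn_ord.
by [].
Qed.

Lemma idx_eq (y1 y2 : idx mS) : restr y1 = restr y2 -> y1 ord_max = y2 ord_max -> y1 = y2.
Proof. by move=> e1 e2; rewrite -(ext_restr y1) -(ext_restr y2) e1 e2. Qed.

Lemma upd_ext_max x s0 s : upd (ext x s0) ord_max s = ext x s.
Proof.
apply: idx_eq; last by rewrite upd_same ext_max.
apply/ffunP => j; rewrite [LHS]ffunE [RHS]ffunE upd_other ?ext_widen //.
by rewrite neq_ltn /= ltn_ord orbT.
Qed.

Lemma ext_upd x (j : 'I_k) u s :
  ext (upd x j u) s = upd (ext x s) (widen_ord (leqnSn k) j) u.
Proof.
apply: idx_eq; last first.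
  by rewrite ext_max upd_other ?ext_max // neq_ltn /= ltn_ord.
apply/ffunP => l; rewrite [LHS]ffunE [RHS]ffunE ext_widen.
case: (eqVneq j l) => [<-|ne]; first by rewrite !upd_same.
rewrite !upd_other ?ext_widen //.
Qed.

Lemma sum_ext (G : idx mS -> F) :
  \sum_y G y = \sum_(x : idx m') \sum_(a : 'I_(f k)) G (ext x a).
Proof.
rewrite pair_big /=.
rewrite (reindex (fun p : idx m' * 'I_(f k) => ext p.1 p.2)) //=.
exists (fun y => (restr y, y ord_max)) => [[x a] _|y _] /=.
  by rewrite restr_ext ext_max.
exact: ext_restr.
Qed.

End Ext.

Lemma sum_nz (F : fieldType) (I : finType) (G : I -> F) : \sum_i G i != 0 -> exists i, G i != 0.
Proof.
move=> H; apply/existsP; apply: contraR H => /existsPn H.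
by rewrite big1 // => i _; move/negbNE/eqP: (H i).
Qed.

Lemma d_ord (F : fieldType) k (f : nat -> nat) (d : forall i : 'I_k, 'M[F]_(f i)) j (h1 h2 : (j < k)%N) :
  d (Ordinal h1) = d (Ordinal h2).
Proof. by rewrite (bool_irrelevance h1 h2). Qed.

Lemma core (F : fieldType) (R : realFieldType) (k : nat) : forall (f : nat -> nat)
  (d : forall i : 'I_k, 'M[F]_(f i)) (rho : 'I_k -> R),
  (forall i, d i *m d i = 0) ->
  (forall i : 'I_k, is_product_expansion (m := fun j : 'I_i.+1 => f (prefix_ord i j))
     (fun j : 'I_i.+1 => if (j < i)%N then Blow (d (prefix_ord i j))
                         else Zlow (d (prefix_ord i j))) (rho i)) ->
  forall a : arr (fun i : 'I_k => f i),
  (exists a0 (b : 'I_k -> arr (fun i : 'I_k => f i)),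
     [/\ forall j x, Zlow (d j) (column a0 j x),
         forall i, in_dir (fun i => Blow (d i)) i (b i) &
         forall x, a x = a0 x + \sum_(i < k) b i x]) ->
  (exists z : forall i : 'I_k, 'I_(f i) -> F,
     (forall i, Zup (d i) (z i)) /\ dot_pure z a != 0) ->
  \prod_(i < k) (rho i * (f i)%:R) <= (wt a)%:R.
Proof.
elim: k => [|k IH] f d rho dd Hrho a [a0 [b [Ha0 Hb Hab]]] [z [Hz Hdot]].
  rewrite big_ord0 ler1n; have [x Hx] := sum_nz Hdot.
  apply/card_gt0P; exists x; rewrite inE; apply: contra Hx => /eqP ->.
  by rewrite mulr0.
pose T := @ord_max k.
have dT : forall j : 'I_k.+1, d (prefix_ord T j) = d j.
  move=> [j hj]; rewrite /prefix_ord /widen_ord; exact: d_ord.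
have [rho0 Hexp _] := Hrho T.
case: (Hexp a) => [|cs [Hcs Hsum Hle]].
  exists (fun j : 'I_k.+1 => if (j < k)%N then b j else (fun x => a0 x + b j x)); split.
    move=> j x /=; rewrite dT; case: ifP => hj; first exact: (Hb j x).
    by case: (Zlow_lin (d j)) => _ CD _; exact: (CD _ _ (Ha0 j x) (Blow_Zlow (dd j) (Hb j x))).
  move=> x; rewrite Hab [RHS]big_ord_recr [in LHS]big_ord_recr /= ltnn.
  rewrite [in RHS](eq_bigr (fun i => b (widen_ord (leqnSn k) i) x)); last by move=> i _; rewrite ltn_ord.
  by rewrite addrCA addrA.
pose W := widen_ord (leqnSn k).
pose a2 : arr (fun i : 'I_k => f i) := fun x' => \sum_(s : 'I_(f k)) z T s * cs T (ext x' s).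
have dW : forall (i : 'I_k) (j : 'I_i.+1),
    d (W (prefix_ord i j)) = d (prefix_ord (W i) j).
  move=> i [j hj]; rewrite /W /prefix_ord /widen_ord; exact: d_ord.
have HR : forall i : 'I_k, is_product_expansion (m := fun j : 'I_i.+1 => f (prefix_ord i j))
    (fun j : 'I_i.+1 => if (j < i)%N then Blow (d (W (prefix_ord i j)))
                        else Zlow (d (W (prefix_ord i j)))) (rho (W i)).
  move=> i; have := Hrho (W i); congr is_product_expansion.
  by apply: functional_extensionality_dep => j /=; rewrite dW.
have HIH := IH f (fun i => d (W i)) (fun i => rho (W i)) (fun i => dd (W i)) HR a2.
have hcsB : forall (j : 'I_k) y, Blow (d (W j)) (column (cs (W j)) (W j) y).
  move=> j y; have := Hcs (W j) y; rewrite /= ltn_ord; by rewrite dT.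
have hcsZ : forall y, Zlow (d T) (column (cs T) T y).
  move=> y; have := Hcs T y; rewrite /= ltnn; by rewrite dT.
have bT0 : forall x', \sum_(s : 'I_(f k)) z T s * b T (ext x' s) = 0.
  move=> x'; case: (pickP (@predT 'I_(f k))) => [s0 _|none]; last first.
    by rewrite big1 // => s _; have := none s.
  rewrite -[RHS](Zup_Blow (Hz T) (Hb T (ext x' s0))); apply: eq_bigr => s _.
  by rewrite /column upd_ext_max.
have csT : forall y, cs T y = a0 y + (\sum_(j < k) (b (W j) y - cs (W j) y)) + b T y.
  move=> y; have := Hsum y; rewrite Hab !big_ord_recr /= sumrB => E.
  have -> : cs T y = (\sum_(i < k) cs (W i) y + cs T y) - \sum_(i < k) cs (W i) y.
    by rewrite addrC addKr.
  rewrite -E; ring.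
have Hdec : exists (a0' : arr (fun j : 'I_k => f j)) (b' : 'I_k -> arr (fun i : 'I_k => f i)),
       [/\ forall (j : 'I_k) (x : idx (fun j0 : 'I_k => f j0)),
           Zlow (d (W j)) (column a0' j x),
           forall i : 'I_k, in_dir (fun i0 : 'I_k => Blow (d (W i0))) i (b' i)
         & forall x : idx (fun i : 'I_k => f i),
           a2 x = a0' x + \sum_(i < k) b' i x].
  exists (fun x' => \sum_s z T s * a0 (ext x' s)).
  exists (fun j x' => \sum_s z T s * (b (W j) (ext x' s) - cs (W j) (ext x' s))).
  split.
  - move=> j x'.
    apply: (C_ext (g := fun u => \sum_s z T s * column a0 (W j) (ext x' s) u)).
      by apply: lin_comb; [exact: Zlow_lin | move=> s; exact: Ha0].
    by move=> u; rewrite /column; apply: eq_bigr => s _; rewrite ext_upd.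
  - move=> j x'.
    apply: (C_ext (g := fun u => \sum_s z T s * (column (b (W j)) (W j) (ext x' s) u
                                   - column (cs (W j)) (W j) (ext x' s) u))).
      apply: lin_comb; first exact: Blow_lin.
      by move=> s; apply: lin_sub; [exact: Blow_lin | exact: Hb | exact: hcsB].
    by move=> u; rewrite /column; apply: eq_bigr => s _; rewrite ext_upd.
  - move=> x'; rewrite /a2.
    under eq_bigr do rewrite csT !mulrDr.
    rewrite !big_split /= bT0 addr0; congr (_ + _).
    under eq_bigr do rewrite mulr_sumr.
    by rewrite exchange_big.
have dotT : dot_pure z (cs T) != 0.
  have : dot_pure z a = \sum_(j < k.+1) dot_pure z (cs j).
    rewrite /dot_pure; under eq_bigr do rewrite Hsum mulr_sumr.
    by rewrite exchange_big.
  rewrite big_ord_recr /= big1 ?add0r => [<- //|j _].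
  apply: (dot_dir0 (j := W j)) => y; exact: Zup_Blow (Hz (W j)) (hcsB j y).
have Hz' : exists z' : forall i : 'I_k, 'I_(f i) -> F,
    (forall i : 'I_k, Zup (d (W i)) (z' i)) /\ dot_pure z' a2 != 0.
  exists (fun i : 'I_k => z (W i)); split; first by move=> i; exact: Hz.
  suff -> : dot_pure (fun i : 'I_k => z (W i)) a2 = dot_pure z (cs T) by [].
  rewrite /dot_pure (sum_ext (f := f)); apply: eq_bigr => x' _.
  rewrite /a2 mulr_sumr; apply: eq_bigr => s _.
  rewrite big_ord_recr /= ext_max.
  under [in RHS]eq_bigr do rewrite ext_widen.
  by rewrite mulrA.
have Hind := HIH Hdec Hz'.
have Hcol : (wt a2 <= colwt (cs T) T)%N.
  rewrite /wt /colwt.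
  apply: leq_trans (leq_imset_card (@restr k f) _).
  apply: subset_leq_card; apply/subsetP => x'; rewrite inE => Hx.
  have [s Hs] := sum_nz Hx.
  have Hc : cs T (ext x' s) != 0 by apply: contra Hs => /eqP ->; rewrite mulr0.
  have h0 : (0 < f k)%N by apply: leq_ltn_trans (ltn_ord s).
  apply/imsetP; exists (ext x' (Ordinal h0)); last by rewrite restr_ext.
  rewrite inE ext_max /=; apply/existsP; exists s.
  by rewrite /column upd_ext_max.
have Hsl : ((f k * colwt (cs T) T)%:R : R) <=
    \sum_(j < T.+1) (f (prefix_ord T j) * colwt (cs j) j)%:R.
  rewrite [X in _ <= X]big_ord_recr /= /T lerDr.
  by apply: sumr_ge0 => i _; rewrite ler0n.
rewrite big_ord_recr /=.
have rf0 : 0 <= rho T * (f k)%:R by rewrite mulr_ge0 ?ler0n.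
apply: le_trans (ler_wpM2r rf0 Hind) _.
apply: le_trans Hle.
rewrite mulrC -mulrA; apply: ler_wpM2l => //.
apply: le_trans Hsl.
by rewrite natrM ler_wpM2l ?ler0n // ler_nat.
Qed.

Lemma gen (F : finFieldType) (R : realFieldType) (t : nat) (f : nat -> nat)
  (n : 'I_t -> nat) : n = (fun i => f i) ->
  forall (d : forall i : 'I_t, 'M[F]_(n i)) (rho : 'I_t -> R),
  (2%N \in [pchar F]) ->
  (forall i : 'I_t, d i *m d i = 0) ->
  (forall i : 'I_t,
     is_product_expansion (m := fun j : 'I_i.+1 => n (prefix_ord i j))
       (fun j : 'I_i.+1 => if (j < i)%N then Blow (d (prefix_ord i j))
                           else Zlow (d (prefix_ord i j)))
       (rho i)) ->
  forall a : arr n,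
  (exists (a0 : arr n) (b : 'I_t -> arr n),
      [/\ in_tensor (fun i => Zlow (d i)) a0,
          forall i : 'I_t, in_dir (fun i => Blow (d i)) i (b i) &
          forall x : idx n, a x = a0 x + \sum_(i < t) b i x]) ->
  (exists z : forall i : 'I_t, 'I_(n i) -> F,
      (forall i : 'I_t, Zup (d i) (z i)) /\ dot_pure z a != 0) ->
  \prod_(i < t) (rho i * (n i)%:R) <= (wt a)%:R.
Proof.
move=> E; subst n => d rho _ dd Hrho a [a0 [b [Ha0 Hb Hab]]] Hz.
apply: (core dd Hrho) => //.
by exists a0, b; split => //; exact: tensor_cols.
Qed.

Theorem lemma4p6 (F : finFieldType) (R : realFieldType) (t : nat)
  (n : 'I_t -> nat) (d : forall i : 'I_t, 'M[F]_(n i)) (rho : 'I_t -> R) :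
  (2%N \in [pchar F]) ->
  (forall i : 'I_t, d i *m d i = 0) ->
  (forall i : 'I_t,
     is_product_expansion (m := fun j : 'I_i.+1 => n (prefix_ord i j))
       (fun j : 'I_i.+1 => if (j < i)%N then Blow (d (prefix_ord i j))
                           else Zlow (d (prefix_ord i j)))
       (rho i)) ->
  forall a : arr n,
  (exists (a0 : arr n) (b : 'I_t -> arr n),
      [/\ in_tensor (fun i => Zlow (d i)) a0,
          forall i : 'I_t, in_dir (fun i => Blow (d i)) i (b i) &
          forall x : idx n, a x = a0 x + \sum_(i < t) b i x]) ->
  (exists z : forall i : 'I_t, 'I_(n i) -> F,
      (forall i : 'I_t, Zup (d i) (z i)) /\ dot_pure z a != 0) ->
  \prod_(i < t) (rho i * (n i)%:R) <= (wt a)%:R.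
Proof.
apply: (gen (f := fun j => if (insub j : option 'I_t) is Some o then n o else 0%N)).
by apply: functional_extensionality => i; rewrite valK.
Qed.
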